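(* Let $n\ge 2$ and $\ln\hat q=[F_n(z_n)]^{-1}\ln z_n$. Then for every integer $2\le i\le n$, $$\frac{(\ln\hat q)_i}{\ln i}=\begin{cases}1,& i\text{ prime},\\0,& i\text{ not prime},\end{cases}$$ and consequently the number of primes $\le n$ is $\pi(n)=\sum_{i=2}^n \frac{(\ln\hat q)_i}{\ln i}$.
   Context: $z_n=(1,\dots,n)^T$; logarithms of vectors are entry-wise. For $1\le i\le n$, $e_{\bar i|n}\in\mathbb{R}^n$ has $k$-th entry $1$ if $i\mid k$, else $0$. For $2\le i\le n$, $f_{i|n}=\sum_{t=1}^{\lfloor \log_i n\rfloor} e_{\overline{i^t}|n}$, and $f_{1|n}=1_n$. $F_n(z_n)=[f_{1|n}\ \cdots\ f_{n|n}]\in\mathbb{R}^{n\times n}$, which is invertible. *)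

(* Defs.v *)
From Stdlib Require Import Reals.
From mathcomp Require Import all_boot.
Set Implicit Arguments. Unset Strict Implicit.

Definition sumR (m n : nat) (g : nat -> R) : R :=
  foldr (fun i acc => Rplus (g i) acc) R0 (iota m (n.+1 - m)).

Definition e_bar (i k : nat) : nat := (i %| k).

Definition f_vec (n i k : nat) : nat :=
  if i == 1 then 1
  else \sum_(1 <= t < (trunc_log i n).+1) e_bar (i ^ t) k.

(* F_n(z_n) as a function of (row k, column j), both 1-based in 1..n:
   column j is f_{j|n}. *)
Definition Fmat (n k j : nat) : R := INR (f_vec n j k).

Definition prime_pi (n : nat) : nat := count prime (iota 0 n.+1).

(* Main.v *)
Require Import Defs.
From Stdlib Require Import Reals Lra.
From mathcomp Require Import all_boot.
From mathcomp Require Import zify.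

Definition sumL (s : seq nat) (g : nat -> R) : R :=
  foldr (fun i acc => Rplus (g i) acc) R0 s.

Lemma sumL_ext s f g : (forall i, i \in s -> f i = g i) -> sumL s f = sumL s g.
Proof.
elim: s => [|a s IH] H //=.
rewrite H ?mem_head // IH //.
by move=> i Hi; apply: H; rewrite in_cons Hi orbT.
Qed.

Lemma sumL_sub s (f g : nat -> R) : sumL s (fun i => Rminus (f i) (g i)) = Rminus (sumL s f) (sumL s g).
Proof. elim: s => [|a s IH] /=; [lra | rewrite IH; lra]. Qed.

Lemma sumL_add s (f g : nat -> R) : sumL s (fun i => Rplus (f i) (g i)) = Rplus (sumL s f) (sumL s g).
Proof. elim: s => [|a s IH] /=; [lra | rewrite IH; lra]. Qed.

Lemma sumL_0 s : sumL s (fun _ => R0) = R0.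
Proof. elim: s => [|a s IH] /=; [lra | rewrite IH; lra]. Qed.

Lemma sumL_ind s p c : uniq s -> p \in s ->
  sumL s (fun j => if j == p then c else R0) = c.
Proof.
elim: s => [|a s IH] //= /andP[Ha Hu].
rewrite in_cons => /orP[/eqP Hp|Hp].
  subst a; rewrite eqxx.
  rewrite (@sumL_ext _ _ (fun _ => R0)); first by rewrite sumL_0; lra.
  by move=> i Hi; case: eqP => // E; subst i; rewrite Hi in Ha.
rewrite IH //; case: eqP => E; last lra.
by subst a; rewrite Hp in Ha.
Qed.

Lemma sumL_count (P : pred nat) s :
  INR (count P s) = sumL s (fun i => if P i then R1 else R0).
Proof.
elim: s => [|a s IH] //=.
rewrite plus_INR IH; case: (P a) => /=; lra.
Qed.

Lemma sum_le T L : \sum_(1 <= t < T.+1) (t <= L : nat) = minn T L.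
Proof.
elim: T => [|T IH].
  rewrite big_geq //; lia.
rewrite big_nat_recr // IH /=.
case: (leqP T.+1 L) => H /=; lia.
Qed.

Lemma sum_dvd j k T L : L <= T ->
  (forall t, 1 <= t <= T -> (j ^ t %| k) = (t <= L)) ->
  \sum_(1 <= t < T.+1) e_bar (j ^ t) k = L.
Proof.
move=> HL H.
rewrite (@eq_big_nat _ _ _ 1 T.+1 _ (fun t => (t <= L : nat))).
  rewrite sum_le; lia.
move=> t Ht; rewrite /e_bar H //; lia.
Qed.

Lemma f_prime n j k : prime j -> 1 <= k <= n -> f_vec n j k = logn j k.
Proof.
move=> Pj Hk; have j1 : 1 < j by apply: prime_gt1.
rewrite /f_vec; case: eqP => [E|_]; first by subst j.
apply: sum_dvd.
  apply: trunc_log_max => //; apply: leq_trans (_ : k <= n); last lia.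
  apply: dvdn_leq; [lia | exact: pfactor_dvdnn].
move=> t Ht; apply: pfactor_dvdn => //; lia.
Qed.

Lemma f_diag n k : 1 <= k <= n -> f_vec n k k = 1.
Proof.
move=> Hk; rewrite /f_vec; case: eqP => [//|k1].
have k2 : 1 < k by lia.
apply: sum_dvd.
  by apply: trunc_log_max => //; rewrite expn1; lia.
move=> t Ht; case: (leqP t 1) => Ht1.
  have -> : t = 1 by lia.
  by rewrite expn1 dvdnn.
apply/negbTE/negP => /dvdn_leq H.
have : k ^ t <= k by apply: H; lia.
have : k ^ 2 <= k ^ t by rewrite leq_exp2l.
rewrite expnS expn1; nia.
Qed.

Lemma f_off n k j : 1 <= k -> k < j -> f_vec n j k = 0.
Proof.
move=> Hk Hj; rewrite /f_vec; case: eqP => [E|_]; first lia.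
apply: sum_dvd => // t Ht.
have -> : (t <= 0) = false by lia.
apply/negbTE/negP => /dvdn_leq H.
have : j ^ t <= k by apply: H; lia.
have : j ^ 1 <= j ^ t by rewrite leq_exp2l; lia.
rewrite expn1; lia.
Qed.

Lemma ln_decomp m N : 0 < m -> m <= N ->
  ln (INR m) = sumL (iota 1 N) (fun j => Rmult (INR (logn j m)) (ln (INR j))).
Proof.
elim/ltn_ind: m => m IH Hm HmN.
case: (leqP m 1) => m1.
  have -> : m = 1 by lia.
  rewrite (@sumL_ext _ _ (fun _ => R0)); first by rewrite sumL_0 ln_1.
  by move=> i _; rewrite logn1 /=; lra.
set p := pdiv m; have Pp : prime p by apply: pdiv_prime.
have p1 : 1 < p by apply: prime_gt1.
have pm : p <= m by apply: pdiv_leq; lia.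
set m' := m %/ p.
have Em : m = p * m' by rewrite /m' mulnC divnK // pdiv_dvd.
have m'0 : 0 < m' by rewrite /m' divn_gt0 //; lia.
have m'm : m' < m by rewrite /m' ltn_Pdiv //; lia.
rewrite (@sumL_ext _ _ (fun j => Rplus (if j == p then ln (INR p) else R0)
                        (Rmult (INR (logn j m')) (ln (INR j))))).
  rewrite sumL_add sumL_ind ?iota_uniq; last by rewrite mem_iota; lia.
  rewrite -(IH m' m'm m'0); last lia.
  rewrite {1}Em mult_INR ln_mult //; apply: lt_0_INR; apply/ltP; lia.
  by []. move=> j _; rewrite [in logn j m]Em lognM //; last lia.
rewrite logn_prime // plus_INR.
case: eqP => [->|_] /=; lra.
Qed.

Definition gq (j : nat) : R := if prime j then ln (INR j) else R0.

Lemma sumR1 n g : sumR 1 n g = sumL (iota 1 n) g.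
Proof. by rewrite /sumR /sumL subn1. Qed.

Lemma exist_sol n k : 1 <= k <= n ->
  sumL (iota 1 n) (fun j => Rmult (Fmat n k j) (gq j)) = ln (INR k).
Proof.
move=> Hk; rewrite (@ln_decomp k n); try lia.
apply: sumL_ext => j _; rewrite /Fmat /gq.
case Pj: (prime j).
  by rewrite f_prime.
rewrite /logn Pj /=; lra.
Qed.

Lemma ln_pos i : 2 <= i -> ln (INR i) <> R0.
Proof.
move=> Hi.
have : Rle (INR 2) (INR i) by apply: le_INR; apply/leP.
rewrite /= => H2; have := ln_increasing 1 (INR i) ltac:(lra) ltac:(lra).
rewrite ln_1; lra.
Qed.

Theorem mainTheorem8 (n : nat) (lnq : nat -> R) :
  2 <= n ->
  (forall k, 1 <= k <= n ->
     sumR 1 n (fun j => Rmult (Fmat n k j) (lnq j)) = ln (INR k)) ->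
  (forall i, 2 <= i <= n ->
     Rdiv (lnq i) (ln (INR i)) = (if prime i then R1 else R0)) /\
  INR (prime_pi n) = sumR 2 n (fun i => Rdiv (lnq i) (ln (INR i))).
Proof.
move=> n2 H.
set d := fun j => Rminus (lnq j) (gq j).
have Hd : forall k, 1 <= k <= n ->
    sumL (iota 1 n) (fun j => Rmult (Fmat n k j) (d j)) = R0.
  move=> k Hk.
  rewrite (@sumL_ext _ _ (fun j => Rminus (Rmult (Fmat n k j) (lnq j))
                                   (Rmult (Fmat n k j) (gq j)))).
    by rewrite sumL_sub -sumR1 H // exist_sol //; lra.
  by move=> j _; rewrite /d; lra.
have D0 : forall m k, k < m -> 1 <= k <= n -> d k = R0.
  elim=> [|m IH] k Hkm Hk; first lia.
  rewrite -(Hd k Hk) (@sumL_ext _ _ (fun j => if j == k then d k else R0)).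
    by rewrite sumL_ind ?iota_uniq // mem_iota; lia.
  move=> j; rewrite mem_iota => Hj.
  case: (ltngtP j k) => Hjk.
  - rewrite (IH j) //; try lia. lra.
  - rewrite /Fmat f_off //; try lia. simpl; lra.
  - subst j; rewrite /Fmat f_diag //; simpl; lra.
have Lq : forall i, 1 <= i <= n -> lnq i = gq i.
  move=> i Hi; have := D0 i.+1 i (ltnSn i) Hi; rewrite /d; lra.
have P1 : forall i, 2 <= i <= n ->
     Rdiv (lnq i) (ln (INR i)) = (if prime i then R1 else R0).
  move=> i Hi; rewrite Lq; last lia.
  rewrite /gq; case: (prime i).
    by apply: Rinv_r; apply: ln_pos; lia.
  by rewrite /Rdiv Rmult_0_l.
split=> //.
rewrite /prime_pi.
have -> : n.+1 = 2 + (n.+1 - 2) by lia.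
rewrite iotaD count_cat /= sumL_count /sumR.
apply: sumL_ext => i; rewrite mem_iota => Hi.
rewrite P1 //; lia.
Qed.
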